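(* Let $\mathcal{M}$ be a matroid on $[n]$, let $\gamma$ be a basic $\ell$-cover of $\mathcal{M}$, and let $H$ be an independent set of $\mathcal{M}(\gamma)$ with $H\subseteq\operatorname{supp}\gamma$ and $\gamma(H)=\ell$. Then: (1) $\mathcal{M}(\gamma)/H=\mathcal{M}(\gamma)^0$, i.e. a set $I\subseteq[n]-H$ satisfies $I\cup H\in\mathcal{M}(\gamma)$ if and only if $I$ is independent in $\mathcal{M}(\gamma)|_{[n]-\operatorname{supp}\gamma}$; (2) if moreover $\gamma(i)\le 1$ for all $i\in[n]$, then $\mathcal{M}(\gamma)|_{[n]-\operatorname{supp}\gamma}=\mathcal{M}|_{[n]-\operatorname{supp}\gamma}$.
   Context: Matroids are identified with their independence complexes. For $\gamma:[n]\to\mathbb{N}_0$ and $S\subseteq[n]$, $\gamma(S)=\sum_{i\in S}\gamma(i)$, $\operatorname{supp}\gamma=\{i:\gamma(i)>0\}$. $\gamma$ is an $\ell$-cover of $\mathcal{M}$ if $\gamma(F)\ge\ell$ for every basis $F$, basic if minimal among $\ell$-covers in the pointwise order. $\mathcal{M}(\gamma)$ is the matroid (complex) generated by the bases $F$ of $\mathcal{M}$ with $\gamma(F)=\ell$, and $\mathcal{M}(\gamma)^0:=\mathcal{M}(\gamma)|_{[n]-\operatorname{supp}\gamma}$. $\mathcal{M}|_A$ denotes restriction and $\mathcal{M}/H$ contraction (independent sets $I\subseteq [n]-H$ with $I\cup H$ independent). *)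

(* Defs.v *)
(* Matroids on [n] = 'I_n, identified with their
   independence complexes (a set of subsets of 'I_n). *)
From mathcomp Require Import all_boot.
Set Implicit Arguments. Unset Strict Implicit. Unset Printing Implicit Defensive.

Section MatroidDefs.
Variable n : nat.
Local Notation T := 'I_n.

Definition is_matroid (M : {set {set T}}) : Prop :=
  [/\ set0 \in M,
      (forall I J : {set T}, J \in M -> I \subset J -> I \in M) &
      (forall I J : {set T}, I \in M -> J \in M -> #|I| < #|J| ->
         exists2 x, x \in J :\: I & x |: I \in M)].

Definition is_basis (M : {set {set T}}) (F : {set T}) : Prop :=
  F \in M /\ (forall J : {set T}, J \in M -> F \subset J -> J = F).

Definition gsum (g : T -> nat) (S : {set T}) : nat := \sum_(i in S) g i.

Definition supp (g : T -> nat) : {set T} := [set i | 0 < g i].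

Definition is_cover (M : {set {set T}}) (l : nat) (g : T -> nat) : Prop :=
  forall F, is_basis M F -> l <= gsum g F.

Definition is_basic_cover (M : {set {set T}}) (l : nat) (g : T -> nat) : Prop :=
  is_cover M l g /\
  (forall g' : T -> nat, is_cover M l g' -> (forall i, g' i <= g i) ->
     forall i, g' i = g i).

(* M(gamma): complex generated by the bases F with gamma(F) = l *)
Definition Mgamma (M : {set {set T}}) (l : nat) (g : T -> nat) : {set {set T}} :=
  [set I : {set T} | [exists F : {set T},
     [&& [forall J : {set T}, (J \in M) ==> (F \subset J) ==> (J == F)],
         F \in M, gsum g F == l & I \subset F]]].

Definition restrict (M : {set {set T}}) (A : {set T}) : {set {set T}} :=
  [set I in M | I \subset A].

Definition contract (M : {set {set T}}) (H : {set T}) : {set {set T}} :=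
  [set I : {set T} | (I \subset ~: H) && (I :|: H \in M)].

End MatroidDefs.

(* Main.v *)
Require Import Defs.
From mathcomp Require Import all_boot.
From mathcomp Require Import zify.
Set Implicit Arguments. Unset Strict Implicit. Unset Printing Implicit Defensive.

Section Aux.
Variable n : nat.
Variable g : 'I_n -> nat.

Lemma gsum_sub (A B : {set 'I_n}) : A \subset B -> gsum g A <= gsum g B.
Proof.
move=> sAB; rewrite /gsum [X in _ <= X](big_setID A) /= (setIidPr sAB).
exact: leq_addr.
Qed.

Lemma gsumU (A B : {set 'I_n}) : gsum g (A :|: B) <= gsum g A + gsum g B.
Proof.
rewrite /gsum (big_setID A) /= setIUl setIid (setUidPl (subsetIr B A)).
rewrite -/(gsum g A) leq_add2l.
apply: gsum_sub; rewrite setDUl setDv set0U; exact: subsetDl.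
Qed.

Lemma gsumU_disj (A B : {set 'I_n}) : [disjoint B & A] ->
  gsum g (A :|: B) = gsum g A + gsum g B.
Proof.
move=> dBA.
rewrite /gsum (big_setID A) /= setIUl setIid (setUidPl (subsetIr B A)).
by rewrite setDUl setDv set0U (setDidPl dBA).
Qed.

Lemma gsum0 (A : {set 'I_n}) : A \subset ~: supp g -> gsum g A = 0.
Proof.
move=> sA; rewrite /gsum big1 // => i /(subsetP sA).
by rewrite in_setC inE lt0n negbK => /eqP.
Qed.

Lemma gsum0_sub (A : {set 'I_n}) : gsum g A = 0 -> A \subset ~: supp g.
Proof.
move/eqP; rewrite /gsum sum_nat_eq0 => /forall_inP h.
by apply/subsetP => i /h; rewrite in_setC inE lt0n negbK.
Qed.

Lemma key (M : {set {set 'I_n}}) l (H F2 I : {set 'I_n}) :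
  is_matroid M -> is_cover M l g -> is_basis M F2 -> gsum g F2 = l ->
  H \subset F2 -> H \subset supp g -> I \in M -> I \subset ~: supp g ->
  exists J, [/\ is_basis M J, gsum g J = l & I :|: H \subset J].
Proof.
move=> [M0 Mdown Maug] cov [F2M F2max] gF2 sHF sHs IM sIZ.
pose P J := [&& J \in M, I \subset J & J \subset I :|: F2].
have PI : P I by rewrite /P IM subxx subsetUl.
case: (@arg_maxnP _ I P (fun J : {set 'I_n} => #|J|) PI) => J /and3P[JM sIJ sJU] Jmax.
have geF : #|F2| <= #|J|.
  rewrite leqNgt; apply/negP => lt.
  have [x /setDP[xF xJ] xJM] := Maug _ _ JM F2M lt.
  have: #|x |: J| <= #|J|.
    apply: Jmax; rewrite /P xJM (subset_trans sIJ (subsetUr _ _)) /=.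
    by rewrite subUset sub1set inE xF orbT sJU.
  by rewrite cardsU1 xJ add1n ltnn.
have JB : is_basis M J.
  split=> // J' J'M sJJ'; apply/eqP; rewrite eq_sym eqEcard sJJ' /= leqNgt.
  apply/negP=> lt.
  have [x /setDP[xJ' xF] xFM] := Maug _ _ F2M J'M (leq_ltn_trans geF lt).
  move: (F2max _ xFM (subsetUr _ _)) => /setP /(_ x).
  by rewrite in_setU1 eqxx (negbTE xF).
have le : gsum g J <= l.
  apply: leq_trans (gsum_sub sJU) _; apply: leq_trans (gsumU _ _) _.
  by rewrite gsum0 // gF2.
have ge := cov _ JB.
have sHJ : H \subset J.
  apply/subsetP => h hH; apply/negPn/negP => hJ.
  have hF : h \in F2 by apply: (subsetP sHF).
  have gh : 0 < g h by move: (subsetP sHs h hH); rewrite inE.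
  have sJ : J \subset I :|: (F2 :\ h).
    apply/subsetP=> x xJ; move/(subsetP sJU): (xJ); rewrite !inE.
    case/orP=> [->//|xF]; rewrite xF andbT; case: (x =P h) => [eq|_]; last by rewrite orbT.
    by rewrite -eq xJ in hJ.
  have le2 : gsum g J <= gsum g (F2 :\ h).
    apply: leq_trans (gsum_sub sJ) _; apply: leq_trans (gsumU _ _) _.
    by rewrite gsum0.
  have e : gsum g F2 = g h + gsum g (F2 :\ h) by rewrite /gsum (big_setD1 _ hF).
  have : g h + gsum g (F2 :\ h) <= 0 + gsum g (F2 :\ h).
    by rewrite -e gF2 add0n; exact: leq_trans ge le2.
  by rewrite leq_add2r leqNgt gh.
exists J; split => //; first by apply/eqP; rewrite eqn_leq le ge.
by rewrite subUset sIJ sHJ.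
Qed.

End Aux.

Theorem proposition3p9 (n : nat) (M : {set {set 'I_n}}) (l : nat)
    (g : 'I_n -> nat) (H : {set 'I_n}) :
  is_matroid M ->
  is_basic_cover M l g ->
  H \in Mgamma M l g ->
  H \subset supp g ->
  gsum g H = l ->
  contract (Mgamma M l g) H = restrict (Mgamma M l g) (~: supp g) /\
  ((forall i, g i <= 1) ->
     restrict (Mgamma M l g) (~: supp g) = restrict M (~: supp g)).
Proof.
move=> Mm [cov _] HMg sHs gH.
have Mm' := Mm; case: Mm' => [M0 Mdown Maug].
move: (HMg); rewrite inE => /existsP[F2 /and4P[/forallP F2max F2M /eqP gF2 sHF]].
have F2B : is_basis M F2.
  by split=> // J JM sFJ; apply/eqP; exact: (implyP (implyP (F2max J) JM) sFJ).
have key' : forall I, I \in M -> I \subset ~: supp g -> I :|: H \in Mgamma M l g.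
  move=> I IM sIZ.
  have [J [[JM Jmax] gJ sIHJ]] := key Mm cov F2B gF2 sHF sHs IM sIZ.
  rewrite inE; apply/existsP; exists J; apply/and4P; split=> //; last by rewrite gJ.
  apply/forallP => J'; apply/implyP => J'M; apply/implyP => sJJ'.
  by rewrite (Jmax J' J'M sJJ').
have MgM : forall I, I \in Mgamma M l g -> I \in M.
  move=> I; rewrite inE => /existsP[F /and4P[_ FM _ sIF]]; exact: Mdown _ _ FM sIF.
have Mgdown : forall I J : {set 'I_n}, J \in Mgamma M l g -> I \subset J -> I \in Mgamma M l g.
  move=> I J; rewrite !inE => /existsP[F /and4P[h1 h2 h3 sJF]] sIJ.
  by apply/existsP; exists F; rewrite h1 h2 h3 (subset_trans sIJ sJF).
split.
  apply/setP => I; rewrite /contract /restrict.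
  apply/idP/idP.
    rewrite in_set => /andP[sIH IHMg].
    have IM : I \in Mgamma M l g by apply: Mgdown IHMg (subsetUl _ _).
    rewrite in_set IM /=; apply: gsum0_sub.
    move: IHMg; rewrite inE => /existsP[F /and4P[_ _ /eqP gF sF]].
    have := gsum_sub g sF; rewrite gF gsumU_disj ?gH; last first.
      by rewrite disjoint_sym disjoints_subset.
    by rewrite -[X in _ <= X]add0n leq_add2r leqn0 => /eqP.
  rewrite in_set => /andP[IMg sIZ]; rewrite in_set key' ?MgM // andbT.
  by apply: (subset_trans sIZ); rewrite setCS.
move=> _; apply/setP => I; rewrite /restrict [in LHS]in_set [in RHS]in_set.
apply/idP/idP => /andP[IM sIZ]; rewrite sIZ andbT.
  exact: MgM.
exact: Mgdown (key' _ IM sIZ) (subsetUl _ _).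
Qed.
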